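(* Let $\Gamma$ be the banana graph of genus $g\ge1$: two vertices $v_1,v_2$ joined by $n=g+1$ edges $e_1,\dots,e_n$. Fix any orientation $\iota$ of $\Gamma$. Let $B_0\in\mathbb Z^{g\times n}$ have $(B_0)_{i,1}=1$, $(B_0)_{i,i+1}=-1$ and other entries $0$, let $S$ be the $n\times n$ diagonal matrix with $S_{jj}=1$ if $\iota$ orients $e_j$ from $v_2$ to $v_1$ and $S_{jj}=-1$ otherwise, and set $B=B_0S$ and $Q=BB^T$. Then the map $\phi$ sending a vertex $\mathbf a$ of $V_Q$ to the orientation $\iota_{\mathbf a}$ of $\Gamma$ defined by: $\iota_{\mathbf a}(e_i)=\iota(e_i)$ if $(B^T\mathbf a)_i>0$, and $\iota_{\mathbf a}(e_i)$ is the reverse of $\iota(e_i)$ if $(B^T\mathbf a)_i<0$, is a well-defined bijection from the vertex set of $V_Q$ onto the set $\mathcal O(\Gamma)$ of strongly connected orientations of $\Gamma$; moreover the orientation $\iota_{\mathbf a}$ does not depend on the choice of $\iota$.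
   Context: $V_Q=\{\mathbf a\in\mathbb R^g:\ \mathbf a^TQ\mathbf a\le(\mathbf a-\mathbf c)^TQ(\mathbf a-\mathbf c)\ \forall\mathbf c\in\mathbb Z^g\}$. Rows of $B$ are the coordinates, with respect to the $\iota$-oriented edges, of the cycles $e_1-e_{i+1}$ ($i=1,\dots,g$) (written for the orientation in which every edge goes from $v_2$ to $v_1$). An orientation of a connected graph is strongly connected if for every ordered pair of vertices $(u,v)$ there is a directed path from $u$ to $v$. *)

(* Defs.v *)
From HB Require Import structures.
From mathcomp Require Import all_boot all_order all_algebra.
From mathcomp Require Import reals.
Set Implicit Arguments. Unset Strict Implicit. Unset Printing Implicit Defensive.
Import Order.TTheory GRing.Theory Num.Theory.
Local Open Scope ring_scope.

(* Banana graph of genus g: vertices v1 = 0, v2 = 1 (in 'I_2), edges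
   e_1..e_n indexed by 'I_n with n = g.+1 (edge e_{j+1} is index j).
   An orientation is a boolean per edge: true means "from v2 to v1". *)
Definition v1 : 'I_2 := ord0.
Definition v2 : 'I_2 := ord_max.

Definition orientation (n : nat) := {ffun 'I_n -> bool}.

Definition darc (n : nat) (o : orientation n) : rel 'I_2 :=
  fun u v => [exists j : 'I_n,
    (o j && (u == v2) && (v == v1)) || (~~ o j && (u == v1) && (v == v2))].

Definition strongly_connected (n : nat) (o : orientation n) : Prop :=
  forall u v : 'I_2, connect (darc o) u v.

Definition B0 (R : realType) (g : nat) : 'M[R]_(g, g.+1) :=
  \matrix_(i < g, j < g.+1)
    (if j == ord0 then 1 else if val j == i.+1 then -1 else 0).

Definition Smx (R : realType) (g : nat) (iota : orientation g.+1) : 'M[R]_g.+1 :=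
  diag_mx (\row_j (if iota j then 1 else -1)).

Definition Bmx (R : realType) (g : nat) (iota : orientation g.+1) : 'M[R]_(g, g.+1) :=
  B0 R g *m Smx R iota.

Definition Qmx (R : realType) (g : nat) (iota : orientation g.+1) : 'M[R]_g :=
  Bmx R iota *m (Bmx R iota)^T.

Definition qform (R : realType) (g : nat) (Q : 'M[R]_g) (a : 'cV[R]_g) : R :=
  ((a^T *m Q *m a) ord0 ord0).

Definition voronoi (R : realType) (g : nat) (Q : 'M[R]_g) : 'cV[R]_g -> Prop :=
  fun a => forall c : 'cV[int]_g,
    qform Q a <= qform Q (a - map_mx (fun z : int => z%:~R) c).

Definition is_vertex (R : realType) (g : nat) (P : 'cV[R]_g -> Prop) (a : 'cV[R]_g) : Prop :=
  P a /\ forall (x y : 'cV[R]_g) (t : R), P x -> P y -> 0 < t -> t < 1 ->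
    a = t *: x + (1 - t) *: y -> x = y.

Definition phi (R : realType) (g : nat) (iota : orientation g.+1) (a : 'cV[R]_g)
  : orientation g.+1 :=
  [ffun j => if 0 < ((Bmx R iota)^T *m a) j ord0 then iota j else ~~ iota j].

(* Main.v *)
Require Import Defs.
From HB Require Import structures.
From mathcomp Require Import all_boot all_order all_algebra.
From mathcomp Require Import reals.
From mathcomp Require Import ring lra zify.
Import Order.TTheory GRing.Theory Num.Theory.
Local Open Scope ring_scope.

Section Aux.
Variable R : realType.
Variable g : nat.

Definition ya (a : 'cV[R]_g) (j : 'I_g.+1) : R := ((B0 R g)^T *m a) j ord0.

Lemma yaE a j : ya a j = \sum_(i < g) (if j == ord0 then 1 else if val j == i.+1 then -1 else 0) * a i ord0.
Proof. by rewrite /ya !mxE; apply: eq_bigr => i _; rewrite !mxE. Qed.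

Lemma ya0 a : ya a ord0 = \sum_i a i ord0.
Proof. by rewrite yaE; apply: eq_bigr => i _; rewrite eqxx mul1r. Qed.

Lemma ya_lift a (k : 'I_g) : ya a (lift ord0 k) = - a k ord0.
Proof.
have hb : forall m, bump 0 m = m.+1 by move=> m; rewrite /bump leq0n add1n.
rewrite yaE (bigD1 k) //= hb eqxx mulN1r big1 ?addr0 // => i hi.
rewrite eqSS.
have -> : (k == i :> nat) = false by apply/negbTE; rewrite eq_sym.
by rewrite mul0r.
Qed.

Lemma sum_ya a : \sum_j ya a j = 0.
Proof.
rewrite big_ord_recl ya0.
have -> : \sum_(i < g) ya a (lift ord0 i) = \sum_(i < g) - a i ord0.
  by apply: eq_bigr => i _; exact: ya_lift.
by rewrite sumrN subrr.
Qed.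

Lemma ya_col (y : 'I_g.+1 -> R) : \sum_j y j = 0 ->
  forall j, ya (\col_k (- y (lift ord0 k))) j = y j.
Proof.
move=> hs j; case: (unliftP ord0 j) => [k ->|->].
  by rewrite ya_lift mxE opprK.
rewrite ya0; under eq_bigr do rewrite mxE.
move: hs; rewrite big_ord_recl sumrN => /eqP; rewrite addr_eq0 => /eqP ->.
by [].
Qed.

Lemma ya_inj a b : (forall j, ya a j = ya b j) -> a = b.
Proof.
move=> h; apply/matrixP => i j; rewrite (ord1 j).
by have := h (lift ord0 i); rewrite !ya_lift => /oppr_inj.
Qed.

Lemma yaD a b j : ya (a + b) j = ya a j + ya b j.
Proof. by rewrite /ya mulmxDr mxE. Qed.
Lemma yaZ t a j : ya (t *: a) j = t * ya a j.
Proof. by rewrite /ya -scalemxAr mxE. Qed.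
Lemma yaB a b j : ya (a - b) j = ya a j - ya b j.
Proof. have -> : a - b = a + (-1) *: b by rewrite scaleN1r. by rewrite yaD yaZ mulN1r. Qed.

Lemma Bt (iota : orientation g.+1) a j :
  ((Bmx R iota)^T *m a) j ord0 = (if iota j then 1 else -1) * ya a j.
Proof.
rewrite /Bmx trmx_mul /Smx tr_diag_mx -mulmxA mul_diag_mx mxE mxE.
by [].
Qed.

Lemma qformE (iota : orientation g.+1) a : qform (Qmx R iota) a = \sum_j (ya a j) ^+ 2.
Proof.
rewrite /qform /Qmx.
have -> : a^T *m (Bmx R iota *m (Bmx R iota)^T) *m a =
  ((Bmx R iota)^T *m a)^T *m ((Bmx R iota)^T *m a).
  by rewrite [((Bmx R iota)^T *m a)^T]trmx_mul trmxK !mulmxA.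
rewrite mxE; apply: eq_bigr => j _; rewrite mxE Bt.
by case: (iota j); rewrite ?mul1r ?mulN1r ?mulrNN expr2.
Qed.

Lemma phi_eq (iota : orientation g.+1) a j : ya a j != 0 ->
  phi iota a j = (0 < ya a j).
Proof.
move=> h; rewrite /phi ffunE Bt.
case: (iota j); rewrite ?mul1r ?mulN1r ?oppr_gt0 /=.
  by case: (0 < ya a j).
by case: ltrgt0P h.
Qed.

End Aux.
Arguments ya {R g} a j.

Section Aux2.
Variable R : realType.

Lemma ex_min n (y : 'I_n.+1 -> R) : exists i0, forall i, y i0 <= y i.
Proof.
case: (@arg_minP _ R _ ord0 predT y isT) => i0 _ h.
by exists i0 => i; apply: h.
Qed.

Lemma ex_max n (y : 'I_n.+1 -> R) : exists i0, forall i, y i <= y i0.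
Proof.
case: (@ex_min n (fun i => - y i)) => i0 h; exists i0 => i.
by have := h i; rewrite lerN2.
Qed.

Lemma sum_ind n (i : 'I_n) : \sum_k ((k == i)%:R : R) = 1.
Proof.
rewrite (bigD1 i) //= eqxx big1 ?addr0 // => k /negbTE -> //.
Qed.

Lemma sum_ge_term n (f : 'I_n -> R) k : (forall i, 0 <= f i) -> f k <= \sum_i f i.
Proof.
move=> h; rewrite (bigD1 k) //= lerDl; apply: sumr_ge0 => i _; exact: h.
Qed.

Lemma sum_le_term n (f : 'I_n -> R) k : (forall i, f i <= 0) -> \sum_i f i <= f k.
Proof.
move=> h; have := @sum_ge_term n (fun i => - f i) k.
rewrite sumrN lerN2; apply => i; rewrite oppr_ge0; exact: h.
Qed.

Lemma uniq_diff n (u v : 'I_n -> R) (P : pred 'I_n) :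
  \sum_i u i = 0 -> \sum_i v i = 0 -> (exists i, P i) -> (exists j, ~~ P j) ->
  (forall i j, P i -> ~~ P j -> u i - u j = v i - v j) -> forall k, u k = v k.
Proof.
move=> hu hv [i0 hi0] [j0 hj0] h.
have hc : forall k, u k - v k = u j0 - v j0.
  move=> k; case hk: (P k).
    have := h k j0 hk hj0; lra.
  have h1 := h i0 k hi0 (negbT hk); have h2 := h i0 j0 hi0 hj0; lra.
have : \sum_(k < n) (u k - v k) = (u j0 - v j0) *+ n.
  by rewrite (eq_bigr (fun _ => u j0 - v j0)) // sumr_const card_ord.
rewrite sumrB hu hv subrr => /esym /eqP; rewrite mulrn_eq0.
case/orP => [/eqP n0|/eqP e k]; last by have := hc k; lra.
by exfalso; case: i0 {hi0 h hc} => m; rewrite n0.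
Qed.

End Aux2.

Section Aux3.
Variable R : realType.
Variable g : nat.
Variable iota : orientation g.+1.

Lemma int_term (zz : int) (d : R) : 0 <= d -> d <= 1 ->
  0 <= zz%:~R * (zz%:~R - 2 * d) + zz%:~R.
Proof.
move=> h0 h1.
have : (1 <= zz)%R \/ zz = 0 \/ (zz <= -1)%R by lia.
case=> [h|[->|h]].
- have h' : (1 <= zz%:~R :> R) by rewrite (_ : 1 = 1%:~R) // ler_int.
  nra.
- by rewrite mul0r add0r.
- have h' : (zz%:~R <= -1 :> R) 
    by rewrite (_ : -1 = (-1)%:~R); [rewrite ler_int | rewrite intrN].
  nra.
Qed.

Lemma qdiff a b : qform (Qmx R iota) (a - b) - qform (Qmx R iota) a =
  \sum_k ya b k * (ya b k - 2 * ya a k).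
Proof.
rewrite !qformE -sumrB; apply: eq_bigr => k _; rewrite yaB; ring.
Qed.

Lemma ya_int (c : 'cV[int]_g) k : exists zz : int,
  ya (map_mx (fun z : int => (z%:~R : R)) c) k = zz%:~R.
Proof.
case: (unliftP ord0 k) => [p ->|->].
  by exists (- c p ord0); rewrite ya_lift mxE intrN.
exists (\sum_i c i ord0); rewrite ya0 rmorph_sum; apply: eq_bigr => i _.
by rewrite mxE.
Qed.

Lemma voronoiP a : voronoi (Qmx R iota) a <-> (forall i j, ya a i - ya a j <= 1).
Proof.
split.
  move=> hv i j; case: (eqVneq i j) => [->|hij]; first by rewrite subrr ler01.
  pose zi k : int := (k == i)%:Z - (k == j)%:Z.
  pose c := \col_k (- zi (lift ord0 k)).
  have hz : forall k, ya (map_mx (fun z : int => (z%:~R : R)) c) k = (k==i)%:R - (k==j)%:R.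
    have -> : map_mx (fun z : int => (z%:~R : R)) c =
       \col_k (- ((lift ord0 k == i)%:R - (lift ord0 k == j)%:R)).
      apply/matrixP => p q; rewrite !mxE /zi intrN intrB.
      by case: (_ == i); case: (_ == j).
    apply: ya_col; by rewrite sumrB !sum_ind subrr.
  have := hv c; rewrite -subr_ge0 qdiff.
  under eq_bigr do rewrite hz.
  rewrite (bigD1 i) //= (bigD1 j) 1?eq_sym //= big1.
    rewrite !eqxx eq_sym (negbTE hij) /=; lra.
  move=> k /andP [hki hkj]; rewrite (negbTE hki) (negbTE hkj) /=; lra.
move=> hd c; rewrite -subr_ge0 qdiff.
case: (@ex_min R g (ya a)) => i0 hi0.
set z := fun k => ya (map_mx (fun z : int => (z%:~R : R)) c) k.
have -> : \sum_k z k * (z k - 2 * ya a k) =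
  \sum_k (z k * (z k - 2 * (ya a k - ya a i0)) + z k) - (1 + 2 * ya a i0) * \sum_k z k.
  rewrite mulr_sumr -sumrB; apply: eq_bigr => k _; ring.
rewrite /z sum_ya mulr0 subr0; apply: sumr_ge0 => k _.
case: (ya_int c k) => zz ->; apply: int_term.
  by have := hi0 k; lra.
by have := hd k i0.
Qed.

End Aux3.

Section Aux4.
Variable R : realType.
Variable g : nat.
Variable iota : orientation g.+1.
Hypothesis hg : (0 < g)%N.

Lemma perturb a k (δ : R) : is_vertex (voronoi (Qmx R iota)) a -> 0 < δ ->
 (forall i j, ya a i - ya a j + δ * ((i == k)%:R - (j == k)%:R) <= 1) ->
 (forall i j, ya a i - ya a j - δ * ((i == k)%:R - (j == k)%:R) <= 1) -> False.
Proof.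
move=> [hV hext] hd h1 h2.
pose d := fun j : 'I_g.+1 => δ * (j == k)%:R - δ / (g.+1)%:R.
have hn : (g.+1)%:R != 0 :> R by rewrite pnatr_eq0.
have hsd : \sum_j d j = 0.
  rewrite sumrB -mulr_sumr sum_ind mulr1 sumr_const card_ord -[δ / _ *+ _]mulr_natr divfK //.
  by rewrite subrr.
pose w := \col_p (- d (lift ord0 p)).
have hw := @ya_col R g d hsd.
have hx : voronoi (Qmx R iota) (a + w).
  apply/voronoiP => i j; rewrite !yaD !hw /d.
  have -> : ya a i + (δ * (i == k)%:R - δ / (g.+1)%:R) - (ya a j + (δ * (j == k)%:R - δ / (g.+1)%:R))
     = ya a i - ya a j + δ * ((i == k)%:R - (j == k)%:R) by ring.
  exact: h1.
have hz : voronoi (Qmx R iota) (a - w).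
  apply/voronoiP => i j; rewrite !yaB !hw /d.
  have -> : ya a i - (δ * (i == k)%:R - δ / (g.+1)%:R) - (ya a j - (δ * (j == k)%:R - δ / (g.+1)%:R))
     = ya a i - ya a j - δ * ((i == k)%:R - (j == k)%:R) by ring.
  exact: h2.
have hae : a = (2^-1) *: (a + w) + (1 - 2^-1) *: (a - w).
  by apply: ya_inj => j; rewrite yaD !yaZ yaD yaB; field.
have h2pos : (0 : R) < 2^-1 by rewrite invr_gt0 ltr0n.
have h2lt : (2^-1 : R) < 1 by rewrite invf_lt1 ?ltr0n // ltr1n.
have := hext _ _ (2^-1) hx hz h2pos h2lt hae.
move=> /(congr1 (fun m => ya m k)); rewrite yaD yaB hw /d eqxx mulr1 => hk.
have hk2 : δ = δ / (g.+1)%:R by move: hk; set t := δ / _; lra.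
have hk' : δ * (g.+1)%:R = δ by rewrite {1}hk2 divfK.
have hn2 : (2 : R) <= (g.+1)%:R by rewrite ler_nat ltnS.
nra.
Qed.

Lemma vertex_struct a : is_vertex (voronoi (Qmx R iota)) a ->
  [/\ (forall i, ya a i != 0),
      (forall i j, 0 < ya a i -> ya a j < 0 -> ya a i - ya a j = 1),
      (exists i, 0 < ya a i) & (exists j, ya a j < 0)].
Proof.
move=> hv; have hV := (@voronoiP R g iota a).1 hv.1.
case: (@ex_min R g (ya a)) => i0 hmin; case: (@ex_max R g (ya a)) => i1 hmax.
have hA : ya a i1 - ya a i0 = 1.
  have := hV i1 i0; rewrite le_eqVlt => /orP [/eqP //|hlt]; exfalso.
  apply: (@perturb a i0 (1 - (ya a i1 - ya a i0)) hv); first lra.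
    move=> i j; have := hmax i; have := hmin j.
    case: (i == i0); case: (j == i0); rewrite /=; lra.
  move=> i j; have := hmax i; have := hmin j.
  case: (i == i0); case: (j == i0); rewrite /=; lra.
have hB : forall k, ya a k = ya a i0 \/ ya a k = ya a i1.
  move=> k; case: (eqVneq (ya a k) (ya a i0)) => [|h0]; first by left.
  case: (eqVneq (ya a k) (ya a i1)) => [|h1']; first by right.
  exfalso.
  have lt0 : ya a i0 < ya a k by rewrite lt_neqAle eq_sym h0 hmin.
  have lt1 : ya a k < ya a i1 by rewrite lt_neqAle h1' hmax.
  have [δ [hδ0 [hδ1 hδ2]]] : exists δ, 0 < δ /\ δ <= ya a i1 - ya a k /\ δ <= ya a k - ya a i0.
    case: (lerP (ya a i1 - ya a k) (ya a k - ya a i0)) => hc.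
      by exists (ya a i1 - ya a k); lra.
    by exists (ya a k - ya a i0); lra.
  apply: (@perturb a k δ hv hδ0) => i j; have := hmax i; have := hmin j; have := hV i j;
   case hik: (i == k); case hjk: (j == k); rewrite /=;
   try (move/eqP: hik => ->); try (move/eqP: hjk => ->); lra.
have hm0 : ya a i0 < 0.
  rewrite ltNge; apply/negP => h.
  have hge : forall i, 0 <= ya a i by move=> i; have := hmin i; lra.
  have := @sum_ge_term R g.+1 (ya a) i1 hge; rewrite sum_ya; lra.
have hM0 : 0 < ya a i1.
  rewrite ltNge; apply/negP => h.
  have hge : forall i, ya a i <= 0 by move=> i; have := hmax i; lra.
  have := @sum_le_term R g.+1 (ya a) i0 hge; rewrite sum_ya; lra.
split.
- move=> i; case: (hB i) => ->; [exact: ltr0_neq0 | exact: lt0r_neq0].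
- move=> i j hi hj; case: (hB i) => ei; case: (hB j) => ej; rewrite ei ej in hi hj *; lra.
- by exists i1.
- by exists i0.
Qed.

End Aux4.

Lemma I2 (u : 'I_2) : u = v1 \/ u = v2.
Proof.
case: u => [[|[|m]] hm]; [left|right|by []]; exact: val_inj.
Qed.

Lemma sc_of n (o : orientation n) : (exists i, o i) -> (exists j, ~~ o j) ->
  strongly_connected o.
Proof.
move=> [i hi] [j hj] u v.
case: (I2 u) => ->; case: (I2 v) => ->; rewrite ?connect0 //; apply: connect1;
  apply/existsP.
- by exists j; rewrite (negbTE hj).
- by exists i; rewrite hi.
Qed.

Lemma sc_to n (o : orientation n) : strongly_connected o ->
  (exists i, o i) /\ (exists j, ~~ o j).
Proof.
move=> h; split.
  case/connectP: (h v2 v1) => -[|x p] /=; first by move=> _ /(congr1 val).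
  case/andP => /existsP [j] hj _ _; exists j.
  by move: hj; case: (o j).
case/connectP: (h v1 v2) => -[|x p] /=; first by move=> _ /(congr1 val).
case/andP => /existsP [j] hj _ _; exists j.
by move: hj; case: (o j).
Qed.

Lemma neg_of (R : realType) (x : R) : x != 0 -> ~~ (0 < x) -> x < 0.
Proof. by move=> h1 h2; rewrite lt_neqAle h1 leNgt. Qed.

Theorem theorem3p10 (R : realType) (g : nat) (hg : (0 < g)%N)
    (iota : orientation g.+1) :
  let V := voronoi (Qmx R iota) in
  (* well-defined: no coordinate of B^T a vanishes at a vertex *)
  (forall a, is_vertex V a -> forall j, ((Bmx R iota)^T *m a) j ord0 != 0) /\
  (* maps into strongly connected orientations *)
  (forall a, is_vertex V a -> strongly_connected (phi iota a)) /\
  (* injective *)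
  (forall a b, is_vertex V a -> is_vertex V b -> phi iota a = phi iota b -> a = b) /\
  (* surjective *)
  (forall o : orientation g.+1, strongly_connected o ->
     exists a, is_vertex V a /\ phi iota a = o) /\
  (* independent of the choice of iota *)
  (forall (iota' : orientation g.+1) a, is_vertex V a -> phi iota' a = phi iota a).
Proof.
move=> V; rewrite {}/V.
have phi_all : forall io a, is_vertex (voronoi (Qmx R iota)) a ->
    phi io a = [ffun j => 0 < ya a j].
  move=> io a hv; apply/ffunP => j; rewrite phi_eq ?ffunE //.
  by case: (@vertex_struct R g iota hg a hv) => hnz _ _ _.
split.
  move=> a hv j; rewrite Bt.
  case: (@vertex_struct R g iota hg a hv) => hnz _ _ _.
  rewrite mulf_neq0 //; case: (iota j); by rewrite ?oppr_eq0 oner_eq0.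
split.
  move=> a hv; rewrite phi_all //.
  case: (@vertex_struct R g iota hg a hv) => _ _ [i hi] [j hj].
  apply: sc_of; [exists i | exists j]; rewrite ffunE //.
  by rewrite -leNgt ltW.
split.
  move=> a b ha hb; rewrite !phi_all // => /ffunP hP.
  case: (@vertex_struct R g iota hg a ha) => hnza hda [i hi] [j hj].
  case: (@vertex_struct R g iota hg b hb) => hnzb hdb _ _.
  apply: ya_inj.
  apply: (@uniq_diff R g.+1 (ya a) (ya b) (fun i => 0 < ya a i)).
  - exact: sum_ya.
  - exact: sum_ya.
  - by exists i.
  - by exists j; rewrite -leNgt ltW.
  move=> i' j' hi' hj'.
  have hPk : forall k, (0 < ya a k) = (0 < ya b k) by move=> k; have := hP k; rewrite !ffunE.
  rewrite hda ?hdb //.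
  - by rewrite -hPk.
  - by apply: neg_of; [exact: hnzb | rewrite -hPk].
  - by apply: neg_of.
split; last first.
  by move=> io a hv; rewrite !phi_all.
move=> o hsc.
case: (@sc_to g.+1 o hsc) => [[i hi] [j hj]].
pose p := \sum_k ((o k)%:R : R).
pose t := p / (g.+1)%:R.
pose y := fun k => (o k)%:R - t.
have hn0 : (0 : R) < (g.+1)%:R by rewrite ltr0n.
have hsum : \sum_k y k = 0.
  rewrite sumrB sumr_const card_ord -[t *+ _]mulr_natr /t divfK ?subrr //.
  by rewrite lt0r_neq0.
have hp0 : 1 <= p.
  have := @sum_ge_term R g.+1 (fun k => (o k)%:R) i; rewrite hi; apply.
  by move=> k; case: (o k).
have hp1 : p <= (g.+1)%:R - 1.
  have := @sum_ge_term R g.+1 (fun k => 1 - (o k)%:R) j.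
  rewrite (negbTE hj) sumrB sumr_const card_ord -/p subr0 => /(_ _).
  have hh : forall k, 0 <= 1 - ((o k)%:R : R) by move=> k; case: (o k) => /=; lra.
  move/(_ hh).
  have -> : (1 : R) *+ g.+1 = (g.+1)%:R by [].
  lra.
have ht0 : 0 < t by rewrite /t divr_gt0 //; lra.
have ht1 : t < 1 by rewrite /t ltr_pdivrMr // mul1r; lra.
pose a := \col_k (- y (lift ord0 k)).
have hy : forall k, ya a k = y k := @ya_col R g y hsum.
have hynz : forall k, ya a k != 0.
  move=> k; rewrite hy /y; case: (o k) => /=.
    by rewrite subr_eq0 eq_sym lt_eqF.
  by rewrite sub0r oppr_eq0 gt_eqF.
exists a; split; last first.
  apply/ffunP => k; rewrite phi_eq // hy /y.
  case: (o k) => /=.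
    by apply/idP; rewrite subr_gt0.
  by apply/negbTE; rewrite -leNgt sub0r oppr_le0 ltW.
split.
  apply/voronoiP => i' j'; rewrite !hy /y.
  by case: (o i'); case: (o j') => /=; lra.
move=> x z s hx hz hs0 hs1 hae.
have hx' := (@voronoiP R g iota x).1 hx.
have hz' := (@voronoiP R g iota z).1 hz.
have hcomb : forall k, y k = s * ya x k + (1 - s) * ya z k.
  by move=> k; rewrite -hy hae yaD !yaZ.
have key : forall i' j', o i' -> ~~ o j' ->
    ya x i' - ya x j' = y i' - y j' /\ ya z i' - ya z j' = y i' - y j'.
  move=> i' j' hi' hj'.
  have hd : y i' - y j' = 1 by rewrite /y hi' (negbTE hj') /=; lra.
  have e1 := hcomb i'; have e2 := hcomb j'.
  have := hx' i' j'; have := hz' i' j'.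
  rewrite hd => h1 h2.
  set X := ya x i' - ya x j' in h2 *; set Z := ya z i' - ya z j' in h1 *.
  have eX : s * X + (1 - s) * Z = 1.
    apply: (eq_trans _ hd); rewrite e1 e2 /X /Z; ring.
  split; nra.
have ex : forall k, ya x k = y k.
  apply: (@uniq_diff R g.+1 (ya x) y o) => //; first exact: sum_ya.
    by exists i.
    by exists j.
  by move=> i' j' hi' hj'; case: (key i' j' hi' hj').
have ez : forall k, ya z k = y k.
  apply: (@uniq_diff R g.+1 (ya z) y o) => //; first exact: sum_ya.
    by exists i.
    by exists j.
  by move=> i' j' hi' hj'; case: (key i' j' hi' hj').
by apply: ya_inj => k; rewrite ex ez.
Qed.
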